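(* Let $n\ge1$, $q\in\mathbb{C}^\times$, $\beta=-q-q^{-1}$, $0\le d\le n$ with $d\equiv n \bmod 2$, and $z\in\mathbb{C}^\times$. Then, as modules over the periodic Temperley--Lieb algebra $\mathsf{pTL}_n(\beta)$, the standard modules $\mathsf{W}_{n,d,z}$ and $\mathsf{W}_{n,d,-z}$ are isomorphic.
   Context: $\mathsf{pTL}_n(\beta)$ is the unital algebra of connectivities generated by $e_0,\dots,e_{n-1}$, where connectivities are diagrams on a cylinder (rectangle with left and right edges identified) with $n$ top and $n$ bottom nodes connected pairwise by non-intersecting curves; $e_j$ ($1\le j\le n-1$) joins top nodes $j,j+1$ and bottom nodes $j,j+1$ with all other strands vertical, and $e_0$ does the same for nodes $n,1$ across the periodic boundary; products stack the second factor on top of the first. A link state with $n$ nodes and $d$ defects is a diagram drawn above a horizontal segment with $n$ nodes, with periodic boundary condition, in which $(n-d)/2$ non-intersecting arcs join nodes pairwise (possibly crossing the periodic boundary) and the remaining $d$ nodes carry defects, vertical lines extending upward to infinity that cannot be overarched; $\mathsf{B}_{n,d}$ is the set of such link states, $|\mathsf{B}_{n,d}|=\binom{n}{(n-d)/2}$. The standard module $\mathsf{W}_{n,d,z}$ is the vector space with basis $\mathsf{B}_{n,d}$, on which a connectivity $c$ acts on $w$ by drawing $w$ above $c$: the result is $0$ if two defects get joined; otherwise it is the link state read off at the bottom, multiplied by $\beta$ for each contractible loop, by $\alpha=z+z^{-1}$ for each non-contractible loop (possible only when $d=0$), and, for $d>0$, by $z$ (resp. $z^{-1}$) for each time a defect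 crosses the periodic boundary moving leftwards (resp. rightwards) as it goes down. *)

(* Defs.v *)
From HB Require Import structures.
From mathcomp Require Import all_boot all_order all_algebra.
Set Implicit Arguments.
Unset Strict Implicit.
Unset Printing Implicit Defensive.
Import Order.TTheory GRing.Theory Num.Theory.

Section PTL.
Variable n : nat.

(* Nodes are 0..n-1 (node k+1 of the paper is k).
   A raw link state assigns to each node either [None] (a defect) or
   [Some (r, p)]: the node is joined by an arc to node [p], the arc leaving
   the node towards the right (r = true) or towards the left (r = false),
   possibly crossing the periodic boundary. *)
Definition raw := {ffun 'I_n -> option (bool * 'I_n)}.

(* the ordinal k mod n (n > 0 is witnessed by i : 'I_n) *)
Definition ordm (i : 'I_n) (k : nat) : 'I_n :=
  @Ordinal n (k %% n) (ltn_pmod k (leq_ltn_trans (leq0n i) (ltn_ord i))).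

Definition ordz (i : 'I_n) (x : int) : 'I_n := ordm i `|(x %% n)%Z|%N.

Definition rdist (i x : 'I_n) : nat := (x + n - i) %% n.

(* signed displacement (in the universal cover) of the arc leaving node i *)
Definition off (i : 'I_n) (e : bool * 'I_n) : int :=
  if e.1 then Posz (rdist i e.2) else (- Posz (rdist e.2 i))%R.

(* validity: consistency of the pairing, exactly d defects, and planarity:
   every node strictly under an arc (i -> p, drawn rightwards from i) is
   joined by an arc to a node strictly under that same arc, the arc staying
   under it (no crossing, no overarched defect, also on the cylinder). *)
Definition valid (d : nat) (P : raw) : bool :=
  [&& [forall i, if P i is Some (r, p) then (p != i) && (P p == Some (~~ r, i))
                 else true],
      #|[pred i | P i == None]| == d &
      [forall i, if P i is Some (true, p) then
         [forall x, (0 < rdist i x < rdist i p)%N ==>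
            (if P x is Some e then
               (0 < Posz (rdist i x) + off x e < Posz (rdist i p))%R
             else false)]
       else true]].

Definition linkstate (d : nat) := {P : raw | valid d P}.

Section Action.
Variables (C : numClosedFieldType) (beta z : C).
Local Open Scope ring_scope.

(* action of the generator e_j on a link state (as a raw state):
   e_j joins a := j-1 and b := j (indices mod n; for j = 0 across the
   periodic boundary, the arc going rightwards from a = n-1 to b = 0).
   Returns [None] for the zero vector, or [Some (c, P')] for c * P'. *)
Definition gen_act (j : 'I_n) (P : raw) : option (C * raw) :=
  let b := j in
  let a := ordm j (j + n - 1)%N in
  let alpha := z + z^-1 in
  let upd (f : 'I_n -> option (bool * 'I_n)) : raw :=
    [ffun x => if x == a then Some (true, b)
               else if x == b then Some (false, a) else f x] in
  match P a, P b with
  | None, None => None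
  | None, Some eb =>
      (* defect at a travels along the cup to b, then along the arc of b *)
      let c := eb.2 in
      Some ((z ^ (- ((Posz a + 1 + off b eb) %/ Posz n)%Z))%R,
            upd (fun x => if x == c then None else P x))
  | Some ea, None =>
      let c := ea.2 in
      Some ((z ^ (- ((Posz b - 1 + off a ea) %/ Posz n)%Z))%R,
            upd (fun x => if x == c then None else P x))
  | Some (r, p), Some eb =>
      if p == b then
        (if r then Some (beta, P)            (* contractible loop *)
         else Some (alpha, upd P))           (* non-contractible loop *)
      else
        let c := p in let c' := eb.2 in
        let l := (1 + off b eb - off a (r, p))%R in
        Some (1, upd (fun x => if x == c then Some (0 < l, c')%R
                               else if x == c' then Some (l < 0, c)%R
                               else P x))
  end.

Definition gen_coef (j : 'I_n) (P' P : raw) : C :=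
  if gen_act j P is Some (c, Q) then (if Q == P' then c else 0) else 0.

(* matrix of e_j acting on W_{n,d,z} (column vectors, in the basis
   B_{n,d} enumerated by enum_val) *)
Definition std_rep (d : nat) (j : 'I_n) : 'M[C]_#|{: linkstate d}| :=
  \matrix_(i, k) gen_coef j (val (enum_val i)) (val (enum_val k)).

End Action.

(* W_{n,d,z} and W_{n,d,z'} are isomorphic as pTL_n(beta)-modules:
   a linear isomorphism intertwining the action of every generator e_j
   (the generators exist for n >= 2; pTL_1 is spanned by the identity). *)
Definition std_modules_iso (C : numClosedFieldType) (beta z z' : C) (d : nat) :
    Prop :=
  exists A : 'M[C]_#|{: linkstate d}|,
    A \in unitmx /\
    forall j : 'I_n, (1 < n)%N ->
      (A *m std_rep beta z d j = std_rep beta z' d j *m A)%R.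

End PTL.

(* Main.v *)
Require Import Defs.
From mathcomp Require Import all_boot all_order all_algebra.
From mathcomp Require Import zify.
Import Order.TTheory GRing.Theory Num.Theory.
Set Implicit Arguments. Unset Strict Implicit.
Local Open Scope ring_scope.
Lemma expNz (C : numClosedFieldType) (z : C) (m : int) : (-z) ^ m = (-1)^+`|m|%N * z ^ m.
Proof.
case: m => k; first exact: exprNn.
rewrite NegzE -!exprnN abszN absz_nat. rewrite (exprNn z) invfM.
by rewrite -exprVn invr_sign.
Qed.
Lemma divz3 (n : nat) (m : int) : (0 < n)%N -> - (n:int) <= m < 2 * n ->
  (m %/ n)%Z = (if m < 0 then -1 else if m < n then 0 else 1).
Proof.
move=> n0 /andP[h1 h2].
have hn : (n:int) != 0 by rewrite eqz_nat -lt0n.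
case: ifP => H1.
  rewrite (_ : m = (-1) * (n:int) + (m + (n:int))); last by lia.
  rewrite divzMDl //.
  rewrite divz_small; first by rewrite addr0.
  rewrite absz_nat; apply/andP; split; lia.
case: ifP => H2.
  by rewrite divz_small // absz_nat; apply/andP; split; lia.
rewrite (_ : m = 1 * (n:int) + (m - (n:int))); last by lia.
rewrite divzMDl //.
rewrite divz_small; first by rewrite addr0.
rewrite absz_nat; apply/andP; split; lia.
Qed.

Lemma congl (n a j c c' : nat) (oa ob l : int) (e1 e2 : nat) :
  (c < n)%N -> (c' < n)%N -> (a = n - 1 /\ j = 0 \/ a + 1 = j)%N ->
  l = 1 + ob - oa -> - (n:int) < l < n ->
  (Posz a + oa = Posz c /\ e1 = 0%N \/ Posz a + oa = Posz c + Posz n /\ e1 = 1%N \/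
     Posz a + oa = Posz c - Posz n /\ e1 = 1%N) ->
  (Posz j + ob = Posz c' /\ e2 = 0%N \/ Posz j + ob = Posz c' + Posz n /\ e2 = 1%N \/
     Posz j + ob = Posz c' - Posz n /\ e2 = 1%N) ->
  (Posz c + l = Posz c' \/ Posz c + l = Posz c' + Posz n \/ Posz c + l = Posz c' - Posz n).
Proof. move=> *; lia. Qed.

Lemma fin (n a j c c' : nat) (oa ob l : int) (x1 x2 x3 x4 x5 x6 : nat) :
  (1 < n)%N -> (a = n - 1 /\ j = 0 \/ a + 1 = j)%N -> l = 1 + ob - oa ->
  (Posz a + oa = Posz c /\ (x1 + x3 = 0)%N \/ Posz a + oa = Posz c + Posz n /\ (x1 + x3 = 1)%N \/
     Posz a + oa = Posz c - Posz n /\ (x1 + x3 = 1)%N) ->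
  (Posz j + ob = Posz c' /\ (x2 + x5 = 0)%N \/ Posz j + ob = Posz c' + Posz n /\ (x2 + x5 = 1)%N \/
     Posz j + ob = Posz c' - Posz n /\ (x2 + x5 = 1)%N) ->
  (Posz c + l = Posz c' /\ (x4 + x6 = 0)%N \/ Posz c + l = Posz c' + Posz n /\ (x4 + x6 = 1)%N \/
     Posz c + l = Posz c' - Posz n /\ (x4 + x6 = 1)%N) ->
  ((x1 + (j < a) + (x2 + false + (x3 + x4 + (x5 + x6 + 0)))) %% 2 = 0 %% 2)%N.
Proof. move=> *; lia. Qed.

Section Main.
Variables (n : nat) (C : numClosedFieldType) (beta z : C) (d : nat).
Local Open Scope ring_scope.

Definition hb (e : option (bool * 'I_n)) (i : 'I_n) : bool :=
  if e is Some (true, p) then (p < i)%N else false.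
Definition sg (P : raw n) : C := \prod_i (-1) ^+ hb (P i) i.

Lemma sg2 P : sg P * sg P = 1.
Proof. by rewrite /sg -big_split /=; apply: big1 => i _; rewrite -signr_addb addbb. Qed.

Lemma sgPQ P Q : sg P * sg Q = \prod_i (-1) ^+ (hb (P i) i + hb (Q i) i)%N.
Proof. by rewrite /sg -big_split; apply: eq_bigr => i _; rewrite exprD. Qed.

Lemma prod_seq (F : 'I_n -> nat) (s : seq 'I_n) : uniq s ->
  (forall x, x \notin s -> ~~ odd (F x)) ->
  \prod_i (-1) ^+ F i = (-1) ^+ (\sum_(x <- s) F x)%N :> C.
Proof.
move=> us Hs; rewrite (bigID (mem s)) /= [X in _ * X]big1 ?mulr1.
  rewrite -big_uniq //; elim: s {us Hs} => [|x s IH]; first by rewrite !big_nil.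
  by rewrite !big_cons exprD IH.
by move=> i /Hs; rewrite -signr_odd => /negbTE ->.
Qed.

Lemma par x y : (x %% 2 = y %% 2)%N -> (-1) ^+ x = (-1) ^+ y :> C.
Proof.
rewrite !modn2 => h; rewrite -signr_odd -[RHS]signr_odd.
by case: (odd x) (odd y) h => [] [].
Qed.

Lemma rdistE (i x : 'I_n) : rdist i x = if (x < i)%N then (x + n - i)%N else (x - i)%N.
Proof.
have := ltn_ord i; have := ltn_ord x => hx hi.
rewrite /rdist; case: ltnP => h; first by rewrite modn_small; lia.
by rewrite (_ : x + n - i = (x - i) + n)%N ?modnDr ?modn_small; lia.
Qed.

Lemma aE (j : 'I_n) : ((ordm j (j + n - 1) = n - 1 :> nat /\ j = 0 :> nat) \/
   ordm j (j + n - 1) + 1 = j :> nat)%N.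
Proof.
have := ltn_ord j => hj /=.
case: (posnP j) => h; first by left; rewrite h add0n modn_small; lia.
by right; rewrite (_ : j + n - 1 = (j - 1) + n)%N ?modnDr ?modn_small; lia.
Qed.

Lemma consP (P : raw n) : valid d P -> forall i r p, P i = Some (r, p) ->
  p != i /\ P p = Some (~~ r, i).
Proof.
case/and3P => /forallP H _ _ i r p E.
by move: (H i); rewrite E => /andP[-> /eqP ->].
Qed.

Lemma planP (P : raw n) : valid d P -> forall i p x, P i = Some (true, p) ->
  (0 < rdist i x < rdist i p)%N ->
  exists e, P x = Some e /\ (0 < Posz (rdist i x) + off x e < Posz (rdist i p)).
Proof.
case/and3P => _ _ /forallP H i p x E hx.
move: (H i); rewrite E => /forallP /(_ x); rewrite hx /=.
by case: (P x) => // e h; exists e.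
Qed.

Lemma neqv (x y : 'I_n) : x != y -> (x : nat) != y.
Proof. by []. Qed.

Lemma hbS r (p i : 'I_n) : hb (Some (r, p)) i = r && (p < i)%N.
Proof. by case: r. Qed.

Lemma rdistD (i x : 'I_n) : (rdist i x = x + n - i /\ x < i \/ rdist i x = x - i /\ i <= x)%N.
Proof. by rewrite rdistE; case: ltnP; [left|right]. Qed.

Lemma arcP r (i p : 'I_n) : p != i ->
  (Posz i + off i (r, p) = Posz p /\ (hb (Some (r, p)) i + hb (Some (~~ r, i)) p = 0)%N) \/
  (Posz i + off i (r, p) = Posz p + Posz n /\ (hb (Some (r, p)) i + hb (Some (~~ r, i)) p = 1)%N) \/
  (Posz i + off i (r, p) = Posz p - Posz n /\ (hb (Some (r, p)) i + hb (Some (~~ r, i)) p = 1)%N).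
Proof.
move=> /neqv pi; have := ltn_ord i; have := ltn_ord p => hp hi.
by case: r; rewrite /off /= rdistE; case: ltnP => h /=; lia.
Qed.

Lemma arcl (c c' : 'I_n) (l : int) : - (n:int) < l < n -> c != c' ->
  (Posz c + l = Posz c' \/ Posz c + l = Posz c' + Posz n \/ Posz c + l = Posz c' - Posz n) ->
  (Posz c + l = Posz c' /\ (hb (Some ((0 < l)%R, c')) c + hb (Some ((l < 0)%R, c)) c' = 0)%N) \/
  (Posz c + l = Posz c' + Posz n /\ (hb (Some ((0 < l)%R, c')) c + hb (Some ((l < 0)%R, c)) c' = 1)%N) \/
  (Posz c + l = Posz c' - Posz n /\ (hb (Some ((0 < l)%R, c')) c + hb (Some ((l < 0)%R, c)) c' = 1)%N).
Proof.
move=> hl /neqv cc H; have := ltn_ord c; have := ltn_ord c' => h1 h2.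
rewrite !hbS; case: (ltP 0 l) => ?; case: (ltP l 0) => ? /=; try lia;
  case: ltnP => ?; case: ltnP => ? /=; lia.
Qed.

Lemma offT (i p : 'I_n) : off i (true, p) = Posz (rdist i p). Proof. by []. Qed.
Lemma offF (i p : 'I_n) : off i (false, p) = - Posz (rdist p i). Proof. by []. Qed.

Lemma mainlem (j : 'I_n) (P : raw n) : (1 < n)%N -> valid d P ->
  gen_act beta (-z) j P =
  (if gen_act beta z j P is Some (c, Q) then Some (sg P * sg Q * c, Q) else None).
Proof.
move=> n1 vP; have cP := consP vP; have pP := planP vP.
rewrite /gen_act /=.
set a := ordm j _.
have Ha : ((a = n - 1 :> nat /\ j = 0 :> nat) \/ a + 1 = j :> nat)%N := aE j.
have ab : a != j by apply/eqP => /(congr1 (@nat_of_ord n)); lia.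

have ja : (j == a) = false by rewrite eq_sym (negbTE ab).
have := ltn_ord a; have := ltn_ord j => ltj lta.
case Ea : (P a) => [[ra c]|]; case Eb : (P j) => [[rb c']|]; last first.
- by [].
{ have [cj Pc] := cP _ _ _ Eb.
  have ca : c' != a by apply/eqP => e; move: Ea; rewrite -e Pc.
  have := ltn_ord c' => ltc.
  change ((j + n - 1) %% n)%N with (nat_of_ord a).
  rewrite [(rb, c').2]/=.
  set Q := [ffun x => _].
  have Qa : Q a = Some (true, j) by rewrite ffunE eqxx.
  have Qj : Q j = Some (false, a) by rewrite ffunE ja eqxx.
  have Qc : Q c' = None by rewrite ffunE (negbTE ca) (negbTE cj) eqxx.
  have QP : forall x, x \notin [:: a; j; c'] -> Q x = P x.
    by move=> x; rewrite !inE !negb_or => /and3P[h1 h2 h3]; rewrite ffunE (negbTE h1) (negbTE h2) (negbTE h3).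
  congr (Some (_, _)); rewrite expNz; congr (_ * _).
  rewrite sgPQ (prod_seq (s := [:: a; j; c'])); first last.
  + by move=> x hx; rewrite QP // addnn odd_double.
  + by rewrite /= !inE !negb_or ab (eq_sym a c') ca (eq_sym j c') cj.
  rewrite !big_cons big_nil Ea Eb Pc Qa Qj Qc.
  apply: par.
  case: rb Eb Pc => Eb Pc /=; rewrite /off /=;
  change ((j + n - 1) %% n)%N with (nat_of_ord a); rewrite rdistE; case: ltnP => h1;
   (rewrite (@divz3 n); last (apply/andP; split; lia)); try lia.
  all: (repeat case: ifP => ?); lia. }
{ have [ca Pc] := cP _ _ _ Ea.
  have cj : c != j by apply/eqP => e; move: Eb; rewrite -e Pc.
  have := ltn_ord c => ltc.
  rewrite [(ra, c).2]/=.
  set Q := [ffun x => _].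
  have Qa : Q a = Some (true, j) by rewrite ffunE eqxx.
  have Qj : Q j = Some (false, a) by rewrite ffunE ja eqxx.
  have Qc : Q c = None by rewrite ffunE (negbTE ca) (negbTE cj) eqxx.
  have QP : forall x, x \notin [:: a; j; c] -> Q x = P x.
    by move=> x; rewrite !inE !negb_or => /and3P[h1 h2 h3]; rewrite ffunE (negbTE h1) (negbTE h2) (negbTE h3).
  congr (Some (_, _)); rewrite expNz; congr (_ * _).
  rewrite sgPQ (prod_seq (s := [:: a; j; c])); first last.
  + by move=> x hx; rewrite QP // addnn odd_double.
  + by rewrite /= !inE !negb_or ab (eq_sym a c) ca (eq_sym j c) cj.
  rewrite !big_cons big_nil Ea Eb Pc Qa Qj Qc.
  apply: par.
  case: ra Ea Pc => Ea Pc /=; rewrite /off /=;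
  try change ((j + n - 1) %% n)%N with (nat_of_ord a); rewrite rdistE; case: ltnP => h1;
   (rewrite (@divz3 n); last (apply/andP; split; lia)); try lia.
  all: (repeat case: ifP => ?); lia. }
have := ltn_ord c => ltc.
have [ca Pc] := cP _ _ _ Ea.
case: eqP => [ecj|/eqP cj].
{ subst c.
  case: ra Ea Pc => Ea Pc /=; first by rewrite sg2 mul1r.
  set Q := [ffun x => _].
  have Qa : Q a = Some (true, j) by rewrite ffunE eqxx.
  have Qj : Q j = Some (false, a) by rewrite ffunE ja eqxx.
  have QP : forall x, x \notin [:: a; j] -> Q x = P x.
    by move=> x; rewrite !inE !negb_or => /andP[h1 h2]; rewrite ffunE (negbTE h1) (negbTE h2).
  congr (Some (_, _)).
  rewrite sgPQ (prod_seq (s := [:: a; j])); first last.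
  + by move=> x hx; rewrite QP // addnn odd_double.
  + by rewrite /= !inE ab.
  rewrite !big_cons big_nil Ea Pc Qa Qj !hbS.
  rewrite (par (y := 1)); last by lia.
  by rewrite expr1 mulN1r invrN opprD. }
have := ltn_ord c' => ltc'.
have [c'j Pc'] := cP _ _ _ Eb.
have c'a : c' != a.
  by apply/eqP => e; move: Ea; rewrite -e Pc' => -[_ e2]; rewrite e2 eqxx in cj.
have cc' : c != c'.
  by apply/eqP => e; move: Pc; rewrite e Pc' => -[_ e2]; rewrite e2 eqxx in ab.
rewrite [(rb, c').2]/=.
set l := (1 + _ - _)%R.
have hl : l = 1 + off j (rb, c') - off a (ra, c) by [].
clearbody l.
set Q := [ffun x => _].
have Qa : Q a = Some (true, j) by rewrite ffunE eqxx.
have Qj : Q j = Some (false, a) by rewrite ffunE ja eqxx.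
have Qc : Q c = Some (0 < l, c') by rewrite ffunE (negbTE ca) (negbTE cj) eqxx.
have Qc' : Q c' = Some (l < 0, c).
  by rewrite ffunE (negbTE c'a) (negbTE c'j) eq_sym (negbTE cc') eqxx.
have QP : forall x, x \notin [:: a; j; c; c'] -> Q x = P x.
  move=> x; rewrite !inE !negb_or => /and4P[h1 h2 h3 h4].
  by rewrite ffunE (negbTE h1) (negbTE h2) (negbTE h3) (negbTE h4).
congr (Some (_, _)).
rewrite mulr1 sgPQ (prod_seq (s := [:: a; j; c; c'])); first last.
+ by move=> x hx; rewrite QP // addnn odd_double.
+ rewrite /= !inE !negb_or (eq_sym a c) (eq_sym a c') (eq_sym j c) (eq_sym j c').
  by rewrite ab ca c'a cj c'j cc'.
rewrite !big_cons big_nil Ea Eb Pc Pc' Qa Qj Qc Qc'.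
have -> : hb (Some (true, j)) a = (j < a)%N by [].
have -> : hb (Some (false, a)) j = false by [].
rewrite (par (y := 0)) ?expr0 //.
have := neqv ab; have := neqv ca; have := neqv c'a; have := neqv cj;
have := neqv c'j; have := neqv cc' => n1' n2 n3 n4 n5 n6.
have hlb : - (n:int) < l < n.
  case: ra Ea Pc hl => Ea Pc hl; case: rb Eb Pc' hl => Eb Pc' hl;
    rewrite ?offT ?offF in hl; rewrite /= in Pc Pc'.
  - have [] := pP a c j Ea.
      by have := rdistD a j; have := rdistD a c; lia.
    move=> e [Pe He]; rewrite Eb in Pe; case: Pe He => <- He.
    rewrite offT in He.
    have := rdistD a j; have := rdistD a c; have := rdistD j c'; lia.
  - have [] := pP a c j Ea.
      by have := rdistD a j; have := rdistD a c; lia.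
    move=> e [Pe He]; rewrite Eb in Pe; case: Pe He => <- He.
    rewrite offF in He.
    have := rdistD a j; have := rdistD a c; have := rdistD c' j; lia.
  - have H : (0 < rdist c c' < rdist c a)%N ->
        0 < Posz (rdist c c') + off c' (false, j) < Posz (rdist c a).
      by move=> h; have [e [Pe He]] := pP c a c' Pc h; rewrite Pc' in Pe; case: Pe He => <-.
    rewrite offF in H.
    have := rdistD c c'; have := rdistD c a; have := rdistD j c'; lia.
  - have [] := pP c' j a Pc'.
      by have := rdistD c' a; have := rdistD c' j; lia.
    move=> e [Pe He]; rewrite Ea in Pe; case: Pe He => <- He.
    rewrite offF in He.
    have := rdistD c' a; have := rdistD c' j; have := rdistD c a; lia.
have A1 := arcP ra ca; have A2 := arcP rb c'j.
have Hc := congl ltc ltc' Ha hl hlb A1 A2.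
have A3 := arcl hlb cc' Hc.
exact: (fin n1 Ha hl A1 A2 A3).
Qed.
End Main.


Local Close Scope ring_scope.

Theorem lemma2p4 (C : numClosedFieldType) (n : nat) (q : C) (d : nat) (z : C) :
  (1 <= n)%N -> (q != 0)%R -> (d <= n)%N -> d = n %[mod 2] -> (z != 0)%R ->
  std_modules_iso n (- q - q^-1)%R z (- z)%R d.
Proof.
Local Open Scope ring_scope.
move=> _ _ _ _ _.
pose A : 'M[C]_#|{: linkstate n d}| :=
  diag_mx (\row_i sg C (val (enum_val i))).
exists A; split.
  suff AA : A *m A = 1%:M by case: (mulmx1_unit AA).
  rewrite /A mulmx_diag; apply/matrixP => i k; rewrite !mxE sg2.
  by [].
move=> j n1; rewrite /A mul_diag_mx mul_mx_diag; apply/matrixP => i k; rewrite !mxE.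
rewrite /gen_coef (mainlem _ _ j n1 (valP (enum_val k))).
case: (gen_act _ _ _ _) => [[c Q]|]; last by rewrite mulr0 mul0r.
case: eqP => [<-|_]; last by rewrite mulr0 mul0r.
by rewrite (mulrC _ (sg C _)) !mulrA sg2 mul1r.
Qed.
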